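(* With the notation of the context, \[ z^+(\beta)=x_1^\uparrow(\beta)-\tfrac1\theta,\qquad z^-(\beta)=x_\theta^\downarrow(\beta)-\tfrac1\theta, \] where $z^+(\beta)=\lim_{h\downarrow0}\frac{z(\beta,h)-z(\beta,0)}{h}$ and $z^-(\beta)=\lim_{h\uparrow0}\frac{z(\beta,h)-z(\beta,0)}{h}$.
   Context: Fix $\theta\in\{2,3,\dots\}$, $\beta>0$. $\Delta=\{x\in[0,1]^\theta:x_1\ge\dots\ge x_\theta,\ \sum x_i=1\}$; for $x,y\in\Delta$, $y\trianglerighteq x$ means $\sum_{j\le i}y_j\ge\sum_{j\le i}x_j$ for all $i$. $\phi_\beta(x)=\frac\beta2\big(\sum_i x_i^2-1\big)-\sum_i x_i\log x_i$, $g_\beta(x)=\max_{y\in\Delta,\,y\trianglerighteq x}\phi_\beta(y)$, and $z(\beta,h)=\max_{x\in\Delta}\big(h(x_1-\tfrac1\theta)+g_\beta(x)\big)$ for $h\ge0$, $z(\beta,h)=\max_{x\in\Delta}\big(h(x_\theta-\tfrac1\theta)+g_\beta(x)\big)$ for $h\le0$. $x^\uparrow(\beta)\in\Delta$ is a maximizer of $\phi_\beta$ over $\Delta$ whose first coordinate is maximal among all maximizers, and $x^\downarrow(\beta)\in\Delta$ is a maximizer of $\phi_\beta$ whose last coordinate $x_\theta$ is minimal among all maximizers. *)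

(* Defs.v *)
From HB Require Import structures.
From mathcomp Require Import all_boot all_order all_algebra.
From mathcomp Require Import all_classical all_reals all_analysis.
Set Implicit Arguments. Unset Strict Implicit. Unset Printing Implicit Defensive.
Import Order.TTheory GRing.Theory Num.Theory.
Local Open Scope classical_set_scope.
Local Open Scope ring_scope.

Section Defs.
Variable R : realType.
Variable theta : nat.

Definition Delta : set ('I_theta -> R) :=
  [set x | (forall i, 0 <= x i <= 1) /\
           (forall i j : 'I_theta, (i <= j)%N -> x j <= x i) /\
           \sum_(i < theta) x i = 1].

Definition dominates (y x : 'I_theta -> R) : Prop :=
  forall i : 'I_theta,
    \sum_(j < theta | (j <= i)%N) x j <= \sum_(j < theta | (j <= i)%N) y j.

Definition phi (beta : R) (x : 'I_theta -> R) : R :=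
  beta / 2 * (\sum_(i < theta) x i ^+ 2 - 1) - \sum_(i < theta) x i * ln (x i).

Definition g (beta : R) (x : 'I_theta -> R) : R :=
  sup [set phi beta y | y in [set y | Delta y /\ dominates y x]].

Definition is_phi_maximizer (beta : R) (x : 'I_theta -> R) : Prop :=
  Delta x /\ forall y, Delta y -> phi beta y <= phi beta x.
End Defs.

Section Defs2.
Variable R : realType.
Variable n : nat.
Local Notation theta := n.+2.

Definition z (beta h : R) : R :=
  if 0 <= h then
    sup [set h * (x ord0 - theta%:R^-1) + g beta x | x in @Delta R theta]
  else
    sup [set h * (x ord_max - theta%:R^-1) + g beta x | x in @Delta R theta].

Definition is_x_up (beta : R) (x : 'I_theta -> R) : Prop :=
  is_phi_maximizer beta x /\
  forall y : 'I_theta -> R, is_phi_maximizer beta y -> y ord0 <= x ord0.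

Definition is_x_down (beta : R) (x : 'I_theta -> R) : Prop :=
  is_phi_maximizer beta x /\
  forall y : 'I_theta -> R, is_phi_maximizer beta y -> x ord_max <= y ord_max.
End Defs2.

(* Main.v *)
Require Import Defs.
From HB Require Import structures.
From mathcomp Require Import all_boot all_order all_algebra.
From mathcomp Require Import all_classical all_reals all_analysis.
From mathcomp Require Import lra.
Import Order.TTheory GRing.Theory Num.Theory numFieldNormedType.Exports.
Local Open Scope classical_set_scope.
Local Open Scope ring_scope.

Lemma xlnx_small (R : realType) (x : R) : 0 < x ->
  - (x * ln x) <= 2 * Num.sqrt x.
Proof.
move=> x0; set y := Num.sqrt x.
have y0 : 0 < y by rewrite sqrtr_gt0.
have xy : x = y ^+ 2 by rewrite sqr_sqrtr // ltW.
have lnx : ln x = ln y *+ 2 by rewrite xy lnXn.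
have hy : - ln y < y^-1 by rewrite -lnV ?posrE //; apply: ln_sublinear; rewrite invr_gt0.
rewrite lnx xy mulr2n.
have : y ^+ 2 * (- ln y) <= y ^+2 * y^-1 by rewrite ler_pM2l ?exprn_gt0 // ltW.
rewrite expr2 mulfK ?gt_eqF //.
lra.
Qed.

Lemma xlnx_cont (R : realType) (t : R) : (fun x : R => x * ln x) x @[x --> t] --> t * ln t.
Proof.
case: (ltgtP t 0) => [tlt0| tgt0 | ->].
- rewrite ln0 ?mulr0 ?(ltW tlt0) //.
  apply/cvgrPdist_le => e e0; near=> x.
  rewrite ln0 ?mulr0 ?subr0 ?normr0 ?ltW //.
  near: x; apply: filterS (lt_nbhsl tlt0) => x /ltW //.
- by apply: cvgM; [exact: cvg_id | exact: continuous_ln].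
- rewrite mul0r; apply/cvgrPdist_le => e e0.
  have d0 : 0 < Num.min 1 ((e/2)^+2) by rewrite lt_min ltr01 exprn_gt0 // divr_gt0.
  near=> x.
  have hx : `|x| <= Num.min 1 ((e/2)^+2)  by near: x; exact: (@nbhs0_le _ R^o _ d0).
  rewrite sub0r normrN.
  case: (lerP x 0) => [x0 | x0]; first by rewrite ln0 // mulr0 normr0 ltW.
  move: hx; rewrite gtr0_norm // le_min => /andP[x1 xe].
  rewrite ler0_norm; last by rewrite pmulr_rle0 // ln_le0.
  apply: (le_trans (@xlnx_small _ _ x0)).
  have : Num.sqrt x <= e / 2.
    have h2 : e/2 = Num.sqrt ((e/2)^+2) by rewrite sqrtr_sqr ger0_norm // divr_ge0 // ltW.
    by rewrite h2 ler_sqrt // exprn_ge0 // divr_ge0 // ltW.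
  lra.
Unshelve. all: by end_near.
Qed.

Section topo.
Import ArrowAsProduct.
Variables (R : realType) (m : nat).

Lemma phi_cont (beta : R) : continuous (@phi R m beta).
Proof.
move=> x; rewrite /phi.
have cp : forall i : 'I_m, (fun y : 'I_m -> R => y i) @ x --> x i.
  by move=> i; exact: (@proj_continuous _ (fun=> R) i x).
have h1 : (fun y : 'I_m -> R => \sum_(i < m) y i ^+ 2) @ x --> \sum_(i < m) x i ^+ 2.
  apply: cvg_big. all: try exact: add_continuous. all: try exact: nbhs_filter.
  by move=> i _; rewrite expr2; exact: (cvgM (cp i) (cp i)).
have h2 : (fun y : 'I_m -> R => \sum_(i < m) y i * ln (y i)) @ x --> \sum_(i < m) x i * ln (x i).
  apply: cvg_big. all: try exact: add_continuous. all: try exact: nbhs_filter.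
  by move=> i _; have := cvg_comp _ _ (cp i) (@xlnx_cont _ (x i)); exact.
have := cvgB (cvgM (cvg_cst (beta/2 : R)) (cvgB h1 (cvg_cst (1:R)))) h2.
exact.
Qed.


Lemma cp (i : 'I_m) (x : 'I_m -> R) : (fun y : 'I_m -> R => y i) @ x --> x i.
Proof. exact: (@proj_continuous _ (fun=> R) i x). Qed.

Lemma closed_le_fun (F G : ('I_m -> R) -> R) :
  continuous F -> continuous G -> closed [set y | F y <= G y].
Proof.
move=> Fc Gc.
rewrite (_ : [set y | F y <= G y] = (fun y => G y - F y) @^-1` [set r : R | 0 <= r]).
  apply: preimage_closed; last exact: closed_ge.
  by move=> y _; have := cvgB (Gc y) (Fc y); exact.
by apply/seteqP; split => y /=; rewrite subr_ge0.
Qed.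

Lemma closed_all (I : Type) (A : I -> set ('I_m -> R)) :
  (forall i, closed (A i)) -> closed [set y | forall i, A i y].
Proof.
move=> Ac; have := closed_bigI (D := setT) (fun i _ => Ac i).
congr closed; apply/seteqP; split => y /=.
  by move=> H i; apply: H.
by move=> H i _; apply: H.
Qed.

Lemma closed_imp (b : bool) (A : set ('I_m -> R)) :
  closed A -> closed [set y | b -> A y].
Proof.
case: b => Ac.
  suff -> : [set y | true -> A y] = A by [].
  by apply/seteqP; split => y /= //; apply.
suff -> : [set y | false -> A y] = setT by exact: closedT.
by apply/seteqP; split => y /= //.
Qed.

Lemma cst_cont (c : R) : continuous (fun _ : 'I_m -> R => c).
Proof. move=> x. have := @cvg_cst _ c _ (nbhs x) _. exact. Qed.

Lemma proj_cont (i : 'I_m) : continuous (fun y : 'I_m -> R => y i).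
Proof. move=> x. exact: (cp i x). Qed.

Lemma Delta_closed : closed (@Delta R m).
Proof.
have -> : @Delta R m = [set y | forall i, 0 <= y i] `&` ([set y | forall i, y i <= 1] `&`
   ([set y | forall i j : 'I_m, (i <= j)%N -> y j <= y i] `&`
    ([set y | \sum_(i < m) y i <= 1] `&` [set y | 1 <= \sum_(i < m) y i]))).
  apply/seteqP; split => y /=.
    move=> [H1 [H2 H3]]; split; first by move=> i; case/andP: (H1 i).
    split; first by move=> i; case/andP: (H1 i).
    by split => //; rewrite H3 lexx.
  move=> [H1 [H2 [H3 [H4 H5]]]]; split; first by move=> i; rewrite H1 H2.
  by split => //; apply/eqP; rewrite eq_le H4 H5.
apply: closedI; first by apply: closed_all => i; apply: closed_le_fun; [exact: cst_cont|exact: proj_cont].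
apply: closedI; first by apply: closed_all => i; apply: closed_le_fun; [exact: proj_cont|exact: cst_cont].
apply: closedI.
  apply: closed_all => i; apply: closed_all => j; apply: closed_imp.
  by apply: closed_le_fun; exact: proj_cont.
have sc : continuous (fun y : 'I_m -> R => \sum_(i < m) y i).
  move=> x.
  have h : (fun y : 'I_m -> R => \sum_(i < m) y i) @ x --> \sum_(i < m) x i.
    apply: cvg_big. all: try exact: add_continuous. all: try exact: nbhs_filter.
    by move=> i _; exact: (cp i x).
  exact: h.
apply: closedI; apply: closed_le_fun => //; exact: cst_cont.
Qed.

Lemma K_compact (s t : R) (i0 : 'I_m) :
  compact [set y | @Delta R m y /\ t <= s * y i0].
Proof.
apply: (@subclosed_compact _ _ [set f : 'I_m -> R | forall i, `[(0:R), 1]%classic (f i)]).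
- apply: closedI; first exact: Delta_closed.
  apply: closed_le_fun; first exact: cst_cont.
  by move=> x; have := cvgM (@cvg_cst _ s _ (nbhs x) _) (cp i0 x); exact.
- have := (@tychonoff _ (fun=> R) (fun=> `[(0:R), 1]%classic) (fun=> @segment_compact R 0 1)).
  exact.
- by move=> y [[H1 _] _] i; rewrite /= in_itv /= H1.
Qed.

Lemma gap (beta : R) (s t M : R) (i0 : 'I_m) :
  (forall y, @Delta R m y -> t <= s * y i0 -> phi beta y < M) ->
  exists2 d : R, 0 < d & forall y, @Delta R m y -> t <= s * y i0 -> phi beta y <= M - d.
Proof.
move=> H.
have [[y0 Ky0]|K0] := pselect ([set y | @Delta R m y /\ t <= s * y i0] !=set0).
  have [c cK cmax] := compact_EVT_max (ex_intro _ y0 Ky0) (@K_compact s t i0)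
     (continuous_subspaceT (@phi_cont beta)).
  have [cD ct] := set_mem cK.
  exists (M - phi beta c); first by rewrite subr_gt0; apply: H.
  move=> y yD yt; rewrite opprB addrC subrK.
  by apply: cmax; apply: mem_set.
exists 1 => // y yD yt; exfalso; apply: K0; by exists y.
Qed.
End topo.

Set Implicit Arguments.

Section main.
Variables (R : realType) (m : nat).
Implicit Types (x y : 'I_m -> R).

Lemma dom_refl x : dominates x x.
Proof. by move=> i. Qed.

Lemma g_le (beta M : R) x : Delta x -> (forall y, Delta y -> phi beta y <= M) ->
  g beta x <= M.
Proof.
move=> xD HM; apply: ge_sup.
  by exists (phi beta x); exists x => //; split => //; exact: dom_refl.
by move=> r [y [yD _] <-]; apply: HM.
Qed.

Lemma g_ge (beta M : R) x : Delta x -> (forall y, Delta y -> phi beta y <= M) ->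
  phi beta x <= g beta x.
Proof.
move=> xD HM; apply: sup_upper_bound; last by exists x => //; split => //; exact: dom_refl.
split; first by exists (phi beta x); exists x => //; split => //; exact: dom_refl.
by exists M => r [y [yD _] <-]; apply: HM.
Qed.

Lemma Delta01 x (i : 'I_m) : Delta x -> 0 <= x i <= 1.
Proof. by case=> H _; apply: H. Qed.

Lemma core (P : ('I_m -> R) -> Prop) (f a : ('I_m -> R) -> R) x0 :
  (forall y, P y -> f y <= f x0) -> (forall y, P y -> a y - a x0 <= 2) ->
  (forall e, 0 < e -> exists2 d, 0 < d & forall y, P y -> a x0 + e <= a y -> f y <= f x0 - d) ->
  forall e, 0 < e -> exists2 d, 0 < d & forall h, 0 <= h -> h < d ->
    forall y, P y -> h * (a y - a x0 - e) <= f x0 - f y.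
Proof.
move=> Hmax H2 Hgap e e0; have [d d0 Hd] := Hgap e e0.
exists (d / 2); first by rewrite divr_gt0.
move=> h h0 hd y Py; have := Hmax y Py; have := H2 y Py.
case: (ltP (a y) (a x0 + e)) => ay.
  by nra.
have := Hd y Py ay; nra.
Qed.
End main.

Lemma dom0 (R : realType) (m : nat) (x y : 'I_m.+1 -> R) :
  dominates y x -> x ord0 <= y ord0.
Proof.
move/(_ ord0).
have e : forall F : 'I_m.+1 -> R, \sum_(j < m.+1 | (j <= @ord0 m)%N) F j = F ord0.
  move=> F; apply: big_pred1 => j /=.
  apply/idP/eqP => [|->//]; rewrite leqn0 => /eqP h; exact: val_inj.
by rewrite !e.
Qed.

Lemma domlast (R : realType) (n : nat) (x y : 'I_n.+2 -> R) :
  Delta x -> Delta y -> dominates y x -> y ord_max <= x ord_max.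
Proof.
move=> [_ [_ Sx]] [_ [_ Sy]] /(_ (inord n)).
have e : forall F : 'I_n.+2 -> R,
    \sum_(j < n.+2 | (j <= @inord n.+1 n)%N) F j = \sum_(i < n.+2) F i - F ord_max.
  move=> F; rewrite [X in _ = X - _](bigD1 ord_max) //= addrC addrK.
  apply: eq_bigl => j; rewrite inordK //.
  rewrite -ltnS ltn_neqAle; have := ltn_ord j; rewrite ltnS => ->; by rewrite andbT.
rewrite !e Sx Sy; lra.
Qed.

Theorem theorem4p1 (R : realType) (n : nat) (beta : R) (hbeta : 0 < beta)
    (xup xdown : 'I_n.+2 -> R) :
  is_x_up beta xup -> is_x_down beta xdown ->
  ((fun h => (z n beta h - z n beta 0) / h) x @[x --> (0:R)^'+]
     --> xup ord0 - (n.+2)%:R^-1) /\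
  ((fun h => (z n beta h - z n beta 0) / h) x @[x --> (0:R)^'-]
     --> xdown ord_max - (n.+2)%:R^-1).
Proof.
move=> [[xuD xumax] xuup] [[xdD xdmax] xddown].
set c := (n.+2)%:R^-1 : R.
have Md : phi beta xdown = phi beta xup.
  by apply/eqP; rewrite eq_le; apply/andP; split; [exact: xumax | exact: xdmax].
have HMd : forall y : 'I_n.+2 -> R, Delta y -> phi beta y <= phi beta xdown.
  move=> y yD; rewrite Md. exact: (xumax y yD).
have c0 : 0 <= c by rewrite invr_ge0 ler0n.
have c1 : c <= 1 by rewrite /c invf_le1 ?ltr0n // ler1n.
have hbnd : forall (h : R) x (i : 'I_n.+2), Delta x -> h * (x i - c) <= `|h|.
  move=> h x i /(Delta01 i)/andP[x0 x1]; case: (lerP 0 h) => h0;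
    [rewrite ger0_norm // | rewrite ltr0_norm //]; nra.
have gle : forall x : 'I_n.+2 -> R, Delta x -> g beta x <= phi beta xup := fun x xD => @g_le _ _ beta (phi beta xup) x xD xumax.
have gge : forall x : 'I_n.+2 -> R, Delta x -> phi beta x <= g beta x := fun x xD => @g_ge _ _ beta (phi beta xup) x xD xumax.
have hsup : forall (h : R) (i : 'I_n.+2), has_sup [set h * (x i - c) + g beta x | x in @Delta R n.+2].
  move=> h i; split; first by exists (h*(xup i - c) + g beta xup); exists xup.
  exists (`|h| + phi beta xup) => r [x xD <-]; apply: lerD; [exact: hbnd|exact: gle].
have z0 : z n beta 0 = phi beta xup.
  rewrite /z lexx; apply/eqP; rewrite eq_le; apply/andP; split.
    apply: ge_sup; first by exists (0 * (xup ord0 - c) + g beta xup); exists xup.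
    by move=> r [x xD <-]; rewrite mul0r add0r; apply: gle.
  have := sup_upper_bound (hsup 0 ord0) (ex_intro2 _ _ xup xuD erefl).
  rewrite /= mul0r add0r => H; exact: le_trans (gge _ xuD) H.
split.
- have Hgap : forall e, 0 < e -> exists2 d, 0 < d & forall y : 'I_n.+2 -> R, Delta y ->
      xup ord0 + e <= y ord0 -> phi beta y <= phi beta xup - d.
    move=> e e0; have [|d d0 Hd] := @gap R n.+2 beta 1 (xup ord0 + e) (phi beta xup) ord0.
      move=> y yD; rewrite mul1r => hy; rewrite ltNge; apply/negP => hM.
      have : is_phi_maximizer beta y by split=> // w wD; apply: le_trans (xumax w wD) hM.
      move/xuup; lra.
    by exists d => // y yD hy; apply: Hd => //; rewrite mul1r.
  have H2 : forall y : 'I_n.+2 -> R, Delta y -> y ord0 - xup ord0 <= 2.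
    move=> y /(Delta01 ord0)/andP[? ?]; move: (Delta01 ord0 xuD) => /andP[? ?]; lra.
  apply/cvgrPdist_le => e e0.
  have [d d0 Hd] := @core _ _ (@Delta R n.+2) (phi beta) (fun y => y ord0) xup xumax H2 Hgap e e0.
  near=> h.
  have h0 : 0 < h by near: h; exact: nbhs_right_gt.
  have hd : h < d by near: h; exact: nbhs_right_lt.
  rewrite /= z0 /z (ltW h0) -/c.
  set S := [set _ | _ in _].
  have lo : h * (xup ord0 - c) + phi beta xup <= sup S.
    apply: le_trans (sup_upper_bound (hsup h ord0) (ex_intro2 _ _ xup xuD erefl)).
    by rewrite lerD2l gge.
  have up : sup S <= phi beta xup + h * (xup ord0 - c + e).
    apply: ge_sup; first by exists (h * (xup ord0 - c) + g beta xup); exists xup.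
    move=> r [x xD <-] /=.
    suff : g beta x <= phi beta xup + h * (xup ord0 - c + e) - h * (x ord0 - c) by lra.
    apply: ge_sup; first by exists (phi beta x); exists x => //; split => //; exact: dom_refl.
    move=> r' [y [yD ydom] <-] /=.
    have := Hd h (ltW h0) hd y yD; have := dom0 ydom; nra.
  have q : sup S - phi beta xup = ((sup S - phi beta xup) / h) * h by rewrite divfK // gt_eqF.
  move: q lo up; set qq := (sup S - phi beta xup) / h => q lo up.
  rewrite ler_norml; apply/andP; split; nra.
- have Hgap : forall e, 0 < e -> exists2 d, 0 < d & forall y : 'I_n.+2 -> R, Delta y ->
      - xdown ord_max + e <= - y ord_max -> phi beta y <= phi beta xdown - d.
    move=> e e0; have [|d d0 Hd] := @gap R n.+2 beta (-1) (- xdown ord_max + e) (phi beta xdown) ord_max.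
      move=> y yD; rewrite mulN1r => hy; rewrite ltNge; apply/negP => hM.
      have : is_phi_maximizer beta y by split=> // w wD; apply: le_trans (HMd w wD) hM.
      move/xddown; lra.
    by exists d => // y yD hy; apply: Hd => //; rewrite mulN1r.
  have H2 : forall y : 'I_n.+2 -> R, Delta y -> - y ord_max - - xdown ord_max <= 2.
    move=> y /(Delta01 ord_max)/andP[? ?]; move: (Delta01 ord_max xdD) => /andP[? ?]; lra.
  apply/cvgrPdist_le => e e0.
  have [d d0 Hd] := @core _ _ (@Delta R n.+2) (phi beta) (fun y => - y ord_max) xdown HMd H2 Hgap e e0.
  near=> h.
  have h0 : h < 0 by near: h; exact: nbhs_left_lt.
  have hd : 0 - h < d by near: h; exact: nbhs_left_ltBl.
  have hf : (0 <= h) = false by rewrite leNgt h0.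
  rewrite /= z0 -Md /z hf -/c.
  set S := [set _ | _ in _].
  have lo : h * (xdown ord_max - c) + phi beta xdown <= sup S.
    apply: le_trans (sup_upper_bound (hsup h ord_max) (ex_intro2 _ _ xdown xdD erefl)).
    by rewrite lerD2l gge.
  have up : sup S <= phi beta xdown + h * (xdown ord_max - c - e).
    apply: ge_sup; first by exists (h * (xdown ord_max - c) + g beta xdown); exists xdown.
    move=> r [x xD <-] /=.
    suff : g beta x <= phi beta xdown + h * (xdown ord_max - c - e) - h * (x ord_max - c) by lra.
    apply: ge_sup; first by exists (phi beta x); exists x => //; split => //; exact: dom_refl.
    move=> r' [y [yD ydom] <-] /=.
    have h0' : 0 <= - h by lra.
    have hd' : - h < d by lra.
    have := Hd (- h) h0' hd' y yD; have := domlast xD yD ydom; nra.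
  have q : sup S - phi beta xdown = ((sup S - phi beta xdown) / h) * h by rewrite divfK // lt_eqF.
  move: q lo up; set qq := (sup S - phi beta xdown) / h => q lo up.
  rewrite ler_norml; apply/andP; split; nra.
Unshelve. all: by end_near.
Qed.
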